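(* Let $n\ge 3$ and let ${\bf a},{\bf b},{\bf c}$ be sequences of positive integers each with sum at most $n$. If $\mathcal T_{{\bf a},{\bf b},{\bf c}}$ has finitely many $G$-orbits, then one of ${\bf a},{\bf b},{\bf c}$ equals $(1)$ or $(n)$.
   Context: $\mathbb F$ is an infinite field of characteristic $\ne 2$. Equip $\mathbb F^{2n}$ (canonical basis $e_1,\ldots,e_{2n}$) with the symmetric bilinear form $(e_i,e_j)=\delta_{i,2n+1-j}$, and let $G={\rm O}_{2n}(\mathbb F)$ be its isometry group. A subspace $V$ is isotropic if $(V,V)=\{0\}$. For a sequence ${\bf a}=(\alpha_1,\ldots,\alpha_p)$ of positive integers with $\sum\alpha_j\le n$, $M_{\bf a}$ is the set of flags $V_1\subset\cdots\subset V_p$ in $\mathbb F^{2n}$ with $\dim V_j=\alpha_1+\cdots+\alpha_j$ and $V_p$ isotropic. $\mathcal T_{{\bf a},{\bf b},{\bf c}}=M_{\bf a}\times M_{\bf b}\times M_{\bf c}$ with the diagonal $G$-action. *)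

(* Defs.v *)
From HB Require Import structures.
From mathcomp Require Import all_boot all_order all_algebra.
Unset Printing Implicit Defensive.
Import GRing.Theory.
Local Open Scope ring_scope.

(* Vectors of F^{2n} are row vectors 'rV[F]_(2n); a subspace is represented
   by the row space of a square matrix 'M[F]_(2n) (mxalgebra, scope %MS). *)

(* Gram matrix of the form (e_i, e_j) = delta_{i, 2n+1-j} (1-based),
   i.e. 0-based indices i + j = 2n - 1. *)
Definition formJ (F : fieldType) (n : nat) : 'M[F]_(2 * n) :=
  \matrix_(i, j) ((i + j == (2 * n).-1)%N)%:R.

(* (u, v) = u *m formJ *m v^T ; g acts on row vectors by v |-> v *m g.
   O_{2n}(F) = matrices preserving the form. *)
Definition orthogonal_group (F : fieldType) (n : nat) : pred 'M[F]_(2 * n) :=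
  [pred g | g *m formJ F n *m g^T == formJ F n].

Definition isotropic (F : fieldType) (n : nat) (A : 'M[F]_(2 * n)) : bool :=
  A *m formJ F n *m A^T == 0.

Definition is_flag (F : fieldType) (n : nat) (a : seq nat)
    (V : seq 'M[F]_(2 * n)) : Prop :=
  [/\ size V = size a,
      (forall j, (j < size a)%N -> \rank (nth 0 V j) = sumn (take j.+1 a)),
      (forall j, (j.+1 < size a)%N -> (nth 0 V j <= nth 0 V j.+1)%MS)
    & isotropic F n (nth 0 V (size a).-1)].

Definition flag_act_eq (F : fieldType) (n : nat) (V W : seq 'M[F]_(2 * n))
    (g : 'M[F]_(2 * n)) : Prop :=
  size V = size W /\ forall j, (j < size V)%N -> (nth 0 V j *m g == nth 0 W j)%MS.

(* T_{a,b,c} = M_a x M_b x M_c has finitely many G-orbits under the diagonal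
   action: finitely many triples represent every orbit. *)
Definition finitely_many_orbits (F : fieldType) (n : nat) (a b c : seq nat) : Prop :=
  exists reps : seq (seq 'M[F]_(2 * n) * seq 'M[F]_(2 * n) * seq 'M[F]_(2 * n)),
    forall X Y Z, is_flag F n a X -> is_flag F n b Y -> is_flag F n c Z ->
      exists2 r, r \in reps &
        exists2 g, g \in orthogonal_group F n &
          [/\ flag_act_eq F n r.1.1 X g, flag_act_eq F n r.1.2 Y g & flag_act_eq F n r.2 Z g].

Definition admissible_seq (n : nat) (a : seq nat) : bool :=
  [&& a != [::], all (fun x => (0 < x)%N) a & (sumn a <= n)%N].

(* Main.v *)
Require Import Defs.
From HB Require Import structures.
From mathcomp Require Import all_boot all_order all_algebra.
From mathcomp Require Import zify ring.
From Stdlib Require Classical_Prop.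
Import GRing.Theory.
Local Open Scope ring_scope.

Section Basics.
Variable F : fieldType.
Variable n : nat.

Local Notation V := 'rV[F]_(2 * n).
Local Notation J := (formJ F n).

Definition form (x y : V) : F := (x *m J *m y^T) 0 0.

Lemma formJ_sym : J^T = J.
Proof. by apply/matrixP => i j; rewrite !mxE addnC. Qed.

Lemma form_sym x y : form x y = form y x.
Proof.
rewrite /form; transitivity ((x *m J *m y^T)^T 0 0); first by rewrite [in RHS]mxE.
by rewrite !trmx_mul trmxK formJ_sym mulmxA.
Qed.

Lemma formDl x y z : form (x + y) z = form x z + form y z.
Proof. by rewrite /form !mulmxDl mxE. Qed.
Lemma formZl a x z : form (a *: x) z = a * form x z.
Proof. by rewrite /form -!scalemxAl mxE. Qed.
Lemma formNl x z : form (- x) z = - form x z.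
Proof. by rewrite -scaleN1r formZl mulN1r. Qed.
Lemma formBl x y z : form (x - y) z = form x z - form y z.
Proof. by rewrite formDl formNl. Qed.
Lemma form0l z : form 0 z = 0.
Proof. by rewrite -(scale0r 0) formZl mul0r. Qed.
Lemma formDr x y z : form z (x + y) = form z x + form z y.
Proof. by rewrite !(form_sym z) formDl. Qed.
Lemma formZr a x z : form z (a *: x) = a * form z x.
Proof. by rewrite !(form_sym z) formZl. Qed.
Lemma formNr x z : form z (- x) = - form z x.
Proof. by rewrite !(form_sym z) formNl. Qed.
Lemma formBr x y z : form z (x - y) = form z x - form z y.
Proof. by rewrite !(form_sym z) formBl. Qed.
Lemma form0r z : form z 0 = 0.
Proof. by rewrite form_sym form0l. Qed.

Lemma form_mx_entry m1 m2 (A : 'M[F]_(m1, 2 * n)) (B : 'M[F]_(m2, 2 * n)) i j :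
  (A *m J *m B^T) i j = form (row i A) (row j B).
Proof.
rewrite /form !mxE; apply: eq_bigr => k _; rewrite !mxE; congr (_ * _).
apply: eq_bigr => l _; rewrite !mxE; congr (_ * _).
Qed.

Lemma form_mulmx (h : 'M[F]_(2 * n)) x y :
  h *m J *m h^T = J -> form (x *m h) (y *m h) = form x y.
Proof.
move=> hJ; rewrite /form trmx_mul !mulmxA -(mulmxA x h J) -(mulmxA x (h *m J)).
by rewrite hJ.
Qed.

Definition ev (k : nat) : V := \row_(j < 2 * n) ((j == k :> nat)%:R).

Lemma form_ev i j : (i < 2 * n)%N -> (j < 2 * n)%N ->
  form (ev i) (ev j) = ((i + j == (2 * n).-1)%N)%:R.
Proof.
move=> hi hj.
have -> : ev i = delta_mx 0 (Ordinal hi).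
  by apply/rowP => k; rewrite !mxE /=.
have -> : ev j = delta_mx 0 (Ordinal hj).
  by apply/rowP => k; rewrite !mxE /=.
rewrite /form trmx_delta -rowE -colE !mxE /=.
done.
Qed.


Definition frame_mx (x : nat -> V) (d : nat) : 'M[F]_(2 * n) :=
  \matrix_(i, j) (if (i < d)%N then x i 0 j else 0).

Lemma row_frame x d i : row i (frame_mx x d) = if (i < d)%N then x i else 0.
Proof. by apply/rowP => j; rewrite !mxE; case: ifP => //; rewrite mxE. Qed.

Lemma row_rV (w : V) (i : 'I_1) : row i w = w.
Proof. by apply/rowP => j; rewrite !mxE (ord1 i). Qed.

Lemma frame_sub_form x d v : (v <= frame_mx x d)%MS ->
  exists r : 'rV[F]_(2 * n), forall w,
    form v w = \sum_(i < 2 * n) r 0 i * (if (i < d)%N then form (x i) w else 0).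
Proof.
case/submxP => D ->; exists D => w.
rewrite {1}/form -!mulmxA [in LHS]mxE; apply: eq_bigr => i _; congr (_ * _).
rewrite mulmxA (@form_mx_entry _ _ (frame_mx x d) w) row_frame row_rV.
by case: ifP => // _; rewrite form0l.
Qed.

Lemma frame_perp x d v w : (v <= frame_mx x d)%MS ->
  (forall i, (i < d)%N -> (i < 2 * n)%N -> form (x i) w = 0) -> form v w = 0.
Proof.
move=> /frame_sub_form [r ->] H; rewrite big1 // => i _.
by case: ifP => hi; rewrite ?mulr0 // H ?mulr0.
Qed.

Lemma frame_mem x d i : (i < d)%N -> (i < 2 * n)%N -> (x i <= frame_mx x d)%MS.
Proof.
move=> hd hi; have := row_sub (Ordinal hi) (frame_mx x d).
by rewrite row_frame /= hd.
Qed.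

Lemma frame_le x d d' : (d <= d')%N -> (frame_mx x d <= frame_mx x d')%MS.
Proof.
move=> le; apply/row_subP => i; rewrite row_frame; case: ifP => hi; last exact: sub0mx.
apply: frame_mem => //; exact: leq_trans hi le.
Qed.

Lemma frame_pid x d : frame_mx x d = pid_mx d *m frame_mx x (2 * n).
Proof.
apply/matrixP => i j; rewrite !mxE (bigD1 i) //= big1 => [|k /negbTE nk].
  by rewrite !mxE eqxx /= ltn_ord; case: (i < d)%N; rewrite ?mul1r ?mul0r addr0.
rewrite [pid_mx _ _ _]mxE (_ : (nat_of_ord i == k) = false) ?mul0r //; rewrite eq_sym; exact: nk.
Qed.

Lemma rank_frame x y d : (d <= n)%N ->
  (forall i j, (i < d)%N -> (j < d)%N -> form (x i) (y j) = (i == j)%:R) ->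
  \rank (frame_mx x d) = d.
Proof.
move=> dn H; have d2n : (d <= 2 * n)%N by lia.
apply/eqP; rewrite eqn_leq; apply/andP; split.
  by rewrite frame_pid; apply: leq_trans (mxrankM_maxl _ _) _; rewrite rank_pid_mx.
have E : (pid_mx d : 'M[F]_(2 * n)) = frame_mx x d *m J *m (frame_mx y d)^T.
  apply/matrixP => i j; rewrite form_mx_entry !row_frame !mxE.
  case: (ltnP i d) => hi; case: (ltnP j d) => hj /=.
  - by rewrite H // andbT.
  - by rewrite form0r andbT; case: eqP => // e; move: hj hi; rewrite e; lia.
  - by rewrite form0l andbF.
  - by rewrite form0l andbF.
have : (\rank (pid_mx d : 'M[F]_(2 * n)) <= \rank (frame_mx x d))%N.
  by rewrite E; apply: leq_trans (mxrankM_maxl _ _) _; apply: mxrankM_maxl.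
by rewrite rank_pid_mx.
Qed.

Definition flag_of (a : seq nat) (x : nat -> V) : seq 'M[F]_(2 * n) :=
  [seq frame_mx x (sumn (take j.+1 a)) | j <- iota 0 (size a)].

Lemma nth_flag_of a x j : (j < size a)%N ->
  nth 0 (flag_of a x) j = frame_mx x (sumn (take j.+1 a)).
Proof. by move=> hj; rewrite (nth_map 0%N) ?size_iota // nth_iota. Qed.

Lemma size_flag_of a x : size (flag_of a x) = size a.
Proof. by rewrite size_map size_iota. Qed.

Lemma sumn_take_le (a : seq nat) j : (sumn (take j a) <= sumn a)%N.
Proof.
by rewrite -{2}(cat_take_drop j a) sumn_cat leq_addr.
Qed.

Lemma sumn_take_mono (a : seq nat) i j : (i <= j)%N -> (sumn (take i a) <= sumn (take j a))%N.
Proof.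
move=> le; rewrite -(subnKC le) takeD sumn_cat leq_addr //.
Qed.

Lemma is_flag_of a x y : (sumn a <= n)%N ->
  (forall i j, (i < n)%N -> (j < n)%N -> form (x i) (x j) = 0) ->
  (forall i j, (i < n)%N -> (j < n)%N -> form (x i) (y j) = (i == j)%:R) ->
  is_flag F n a (flag_of a x).
Proof.
move=> sa Hx Hy; split.
- exact: size_flag_of.
- move=> j hj; rewrite nth_flag_of //; apply: rank_frame.
    exact: leq_trans (sumn_take_le _ _) sa.
  move=> i k hi hk; have := sumn_take_le a j.+1 => le; apply: Hy; lia.
- move=> j hj; rewrite !nth_flag_of //; last exact: ltnW.
  by apply: frame_le; apply: sumn_take_mono.
- rewrite /isotropic; case: a sa => [|a0 a'] sa /=.
    by apply/eqP; apply/matrixP => i j; rewrite form_mx_entry !mxE !row0 ?form0l.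
  rewrite (nth_flag_of (a0 :: a') x (size a') (ltnSn _)) (_ : (size a').+1 = size (a0 :: a')) // take_size.
  apply/eqP/matrixP => i j; rewrite form_mx_entry !row_frame mxE.
  case: ifP => hi; last by rewrite form0l.
  case: ifP => hj; last by rewrite form0r.
  by apply: Hx; [exact: leq_trans hi sa | exact: leq_trans hj sa].
Qed.

End Basics.

Section Core.
Variable F : fieldType.
Variable n : nat.
Hypothesis hn : (3 <= n)%N.
Local Notation V := 'rV[F]_(2 * n).
Local Notation form := (@form F n).
Local Notation ev := (@ev F n).
Local Notation flag_of := (@flag_of F n).
Local Notation frame_mx := (@frame_mx F n).

Definition E0 : V := ev (0).
Definition E1 : V := ev (1).
Definition Ec : V := ev (n.-1).
Definition Fc : V := ev (n).
Definition F1 : V := ev ((2 * n).-2).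
Definition F0 : V := ev ((2 * n).-1).

Ltac evtac := rewrite form_ev; [| lia | lia];
  first [ rewrite (_ : (_ == _)%N = true); [by [] | by apply/eqP; lia]
        | rewrite (_ : (_ == _)%N = false); [by [] | by apply/negbTE/eqP; lia] ].

Lemma t_E0_E0 : form E0 E0 = 0. Proof. rewrite /E0 /E0; evtac. Qed.
Lemma t_E0_E1 : form E0 E1 = 0. Proof. rewrite /E0 /E1; evtac. Qed.
Lemma t_E0_Ec : form E0 Ec = 0. Proof. rewrite /E0 /Ec; evtac. Qed.
Lemma t_E0_Fc : form E0 Fc = 0. Proof. rewrite /E0 /Fc; evtac. Qed.
Lemma t_E0_F1 : form E0 F1 = 0. Proof. rewrite /E0 /F1; evtac. Qed.
Lemma t_E0_F0 : form E0 F0 = 1. Proof. rewrite /E0 /F0; evtac. Qed.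
Lemma t_E1_E0 : form E1 E0 = 0. Proof. rewrite /E1 /E0; evtac. Qed.
Lemma t_E1_E1 : form E1 E1 = 0. Proof. rewrite /E1 /E1; evtac. Qed.
Lemma t_E1_Ec : form E1 Ec = 0. Proof. rewrite /E1 /Ec; evtac. Qed.
Lemma t_E1_Fc : form E1 Fc = 0. Proof. rewrite /E1 /Fc; evtac. Qed.
Lemma t_E1_F1 : form E1 F1 = 1. Proof. rewrite /E1 /F1; evtac. Qed.
Lemma t_E1_F0 : form E1 F0 = 0. Proof. rewrite /E1 /F0; evtac. Qed.
Lemma t_Ec_E0 : form Ec E0 = 0. Proof. rewrite /Ec /E0; evtac. Qed.
Lemma t_Ec_E1 : form Ec E1 = 0. Proof. rewrite /Ec /E1; evtac. Qed.
Lemma t_Ec_Ec : form Ec Ec = 0. Proof. rewrite /Ec /Ec; evtac. Qed.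
Lemma t_Ec_Fc : form Ec Fc = 1. Proof. rewrite /Ec /Fc; evtac. Qed.
Lemma t_Ec_F1 : form Ec F1 = 0. Proof. rewrite /Ec /F1; evtac. Qed.
Lemma t_Ec_F0 : form Ec F0 = 0. Proof. rewrite /Ec /F0; evtac. Qed.
Lemma t_Fc_E0 : form Fc E0 = 0. Proof. rewrite /Fc /E0; evtac. Qed.
Lemma t_Fc_E1 : form Fc E1 = 0. Proof. rewrite /Fc /E1; evtac. Qed.
Lemma t_Fc_Ec : form Fc Ec = 1. Proof. rewrite /Fc /Ec; evtac. Qed.
Lemma t_Fc_Fc : form Fc Fc = 0. Proof. rewrite /Fc /Fc; evtac. Qed.
Lemma t_Fc_F1 : form Fc F1 = 0. Proof. rewrite /Fc /F1; evtac. Qed.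
Lemma t_Fc_F0 : form Fc F0 = 0. Proof. rewrite /Fc /F0; evtac. Qed.
Lemma t_F1_E0 : form F1 E0 = 0. Proof. rewrite /F1 /E0; evtac. Qed.
Lemma t_F1_E1 : form F1 E1 = 1. Proof. rewrite /F1 /E1; evtac. Qed.
Lemma t_F1_Ec : form F1 Ec = 0. Proof. rewrite /F1 /Ec; evtac. Qed.
Lemma t_F1_Fc : form F1 Fc = 0. Proof. rewrite /F1 /Fc; evtac. Qed.
Lemma t_F1_F1 : form F1 F1 = 0. Proof. rewrite /F1 /F1; evtac. Qed.
Lemma t_F1_F0 : form F1 F0 = 0. Proof. rewrite /F1 /F0; evtac. Qed.
Lemma t_F0_E0 : form F0 E0 = 1. Proof. rewrite /F0 /E0; evtac. Qed.
Lemma t_F0_E1 : form F0 E1 = 0. Proof. rewrite /F0 /E1; evtac. Qed.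
Lemma t_F0_Ec : form F0 Ec = 0. Proof. rewrite /F0 /Ec; evtac. Qed.
Lemma t_F0_Fc : form F0 Fc = 0. Proof. rewrite /F0 /Fc; evtac. Qed.
Lemma t_F0_F1 : form F0 F1 = 0. Proof. rewrite /F0 /F1; evtac. Qed.
Lemma t_F0_F0 : form F0 F0 = 0. Proof. rewrite /F0 /F0; evtac. Qed.
Definition tbl := (t_E0_E0, t_E0_E1, t_E0_Ec, t_E0_Fc, t_E0_F1, t_E0_F0, t_E1_E0, t_E1_E1, t_E1_Ec, t_E1_Fc, t_E1_F1, t_E1_F0, t_Ec_E0, t_Ec_E1, t_Ec_Ec, t_Ec_Fc, t_Ec_F1, t_Ec_F0, t_Fc_E0, t_Fc_E1, t_Fc_Ec, t_Fc_Fc, t_Fc_F1, t_Fc_F0, t_F1_E0, t_F1_E1, t_F1_Ec, t_F1_Fc, t_F1_F1, t_F1_F0, t_F0_E0, t_F0_E1, t_F0_Ec, t_F0_Fc, t_F0_F1, t_F0_F0).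

Definition pad k := (2 <= k)%N && (k <= n - 2)%N.

Definition core (v : V) := forall k, pad k ->
  form (ev k) v = 0 /\ form (ev ((2 * n).-1 - k)) v = 0.

Lemma core0 : core 0.
Proof. by move=> k _; rewrite !form0r. Qed.
Lemma coreD u v : core u -> core v -> core (u + v).
Proof. by move=> cu cv k pk; case: (cu k pk); case: (cv k pk) => a b c d; rewrite !formDr a b c d addr0. Qed.
Lemma coreZ a v : core v -> core (a *: v).
Proof. by move=> cv k pk; case: (cv k pk) => b c; rewrite !formZr b c mulr0. Qed.
Lemma coreN v : core v -> core (- v).
Proof. by move=> cv; rewrite -scaleN1r; apply: coreZ. Qed.
Lemma coreB u v : core u -> core v -> core (u - v).
Proof. by move=> cu cv; apply: coreD => //; apply: coreN. Qed.

Lemma core_evi i : (i < 2 * n)%N -> ~~ pad i -> ~~ pad ((2 * n).-1 - i) -> core (ev i).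
Proof.
move=> hi p1 p2 k pk; move: p1 p2 pk; rewrite /pad => p1 p2 /andP [k1 k2].
rewrite !form_ev; [|lia|lia|lia|lia].
rewrite (_ : (k + i == (2 * n).-1)%N = false); last by apply/negbTE/eqP; lia.
by rewrite (_ : ((2 * n).-1 - k + i == (2 * n).-1)%N = false) //; apply/negbTE/eqP; lia.
Qed.

Lemma coreE0 : core E0. Proof. by apply: core_evi; rewrite /pad; lia. Qed.
Lemma coreE1 : core E1. Proof. by apply: core_evi; rewrite /pad; lia. Qed.
Lemma coreEc : core Ec. Proof. by apply: core_evi; rewrite /pad; lia. Qed.
Lemma coreFc : core Fc. Proof. by apply: core_evi; rewrite /pad; lia. Qed.
Lemma coreF1 : core F1. Proof. by apply: core_evi; rewrite /pad; lia. Qed.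
Lemma coreF0 : core F0. Proof. by apply: core_evi; rewrite /pad; lia. Qed.

Definition coreB6 := (coreE0, coreE1, coreEc, coreFc, coreF1, coreF0).

Lemma pad_pad i j : pad i -> pad j -> form (ev i) (ev j) = 0.
Proof.
rewrite /pad => /andP [i1 i2] /andP [j1 j2]; rewrite form_ev; [|lia|lia].
by rewrite (_ : (i + j == (2 * n).-1)%N = false) //; apply/negbTE/eqP; lia.
Qed.

Lemma pad_dual i j : pad i -> pad j -> form (ev i) (ev ((2 * n).-1 - j)) = (i == j)%:R.
Proof.
rewrite /pad => /andP [i1 i2] /andP [j1 j2]; rewrite form_ev; [|lia|lia].
congr (_ %:R); apply/eqP; case: eqP => e; apply/eqP; lia.
Qed.

Definition mkframe (v0 v1 v2 : V) (i : nat) : V :=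
  if i == 0%N then v0 else if i == 1%N then v1 else if i == n.-1 then v2 else ev i.
Definition mkdual (v0 v1 v2 : V) (i : nat) : V :=
  if i == 0%N then v0 else if i == 1%N then v1 else if i == n.-1 then v2
  else ev ((2 * n).-1 - i).

Lemma idx_cases i : (i < n)%N -> [\/ i = 0%N, i = 1%N, i = n.-1 | pad i].
Proof.
move=> hi; case: (ltnP i 2) => h2.
  by case: i hi h2 => [|[|]] //; [constructor 1 | constructor 2].
case: (ltnP i n.-1) => h3.
  by constructor 4; rewrite /pad; apply/andP; split; lia.
by constructor 3; lia.
Qed.

Section MK.
Variables v0 v1 v2 : V.
Lemma mkf0 : mkframe v0 v1 v2 0 = v0. Proof. by []. Qed.
Lemma mkf1 : mkframe v0 v1 v2 1 = v1. Proof. by []. Qed.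
Lemma nm0 : (n.-1 == 0)%N = false. Proof. by apply/negbTE/eqP; lia. Qed.
Lemma nm1 : (n.-1 == 1)%N = false. Proof. by apply/negbTE/eqP; lia. Qed.
Lemma mkfc : mkframe v0 v1 v2 n.-1 = v2.
Proof. by rewrite /mkframe nm0 nm1 eqxx. Qed.
Lemma pad_ne i : pad i -> [/\ (i == 0)%N = false, (i == 1)%N = false & (i == n.-1)%N = false].
Proof. by rewrite /pad => /andP [h1 h2]; split; apply/negbTE/eqP; lia. Qed.
Lemma mkfp i : pad i -> mkframe v0 v1 v2 i = ev i.
Proof. by move=> /pad_ne [a b c]; rewrite /mkframe a b c. Qed.
Lemma mkd0 : mkdual v0 v1 v2 0 = v0. Proof. by []. Qed.
Lemma mkd1 : mkdual v0 v1 v2 1 = v1. Proof. by []. Qed.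
Lemma mkdc : mkdual v0 v1 v2 n.-1 = v2.
Proof. by rewrite /mkdual nm0 nm1 eqxx. Qed.
Lemma mkdp i : pad i -> mkdual v0 v1 v2 i = ev ((2 * n).-1 - i).
Proof. by move=> /pad_ne [a b c]; rewrite /mkdual a b c. Qed.
End MK.

Lemma frame_ok v0 v1 v2 u0 u1 u2 :
  core v0 -> core v1 -> core v2 -> core u0 -> core u1 -> core u2 ->
  form v0 v0 = 0 -> form v0 v1 = 0 -> form v0 v2 = 0 ->
  form v1 v1 = 0 -> form v1 v2 = 0 -> form v2 v2 = 0 ->
  form v0 u0 = 1 -> form v0 u1 = 0 -> form v0 u2 = 0 ->
  form v1 u0 = 0 -> form v1 u1 = 1 -> form v1 u2 = 0 ->
  form v2 u0 = 0 -> form v2 u1 = 0 -> form v2 u2 = 1 ->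
  (forall i j, (i < n)%N -> (j < n)%N -> form (mkframe v0 v1 v2 i) (mkframe v0 v1 v2 j) = 0) /\
  (forall i j, (i < n)%N -> (j < n)%N ->
     form (mkframe v0 v1 v2 i) (mkdual u0 u1 u2 j) = (i == j)%:R).
Proof.
move=> c0 c1 c2 d0 d1 d2 h00 h01 h02 h11 h12 h22 g00 g01 g02 g10 g11 g12 g20 g21 g22.
have h10 : form v1 v0 = 0 by rewrite form_sym.
have h20 : form v2 v0 = 0 by rewrite form_sym.
have h21 : form v2 v1 = 0 by rewrite form_sym.
have n0 : (n.-1 == 0)%N = false by apply/negbTE/eqP; lia.
have n1 : (n.-1 == 1)%N = false by apply/negbTE/eqP; lia.
have n0' : (0 == n.-1)%N = false by apply/negbTE/eqP; lia.
have n1' : (1 == n.-1)%N = false by apply/negbTE/eqP; lia.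
have corep : forall v k, core v -> pad k -> form (ev k) v = 0 /\ form v (ev k) = 0.
  by move=> v k cv pk; case: (cv k pk) => a _; split => //; rewrite form_sym.
have corepd : forall v k, core v -> pad k -> form v (ev ((2 * n).-1 - k)) = 0.
  by move=> v k cv pk; case: (cv k pk) => _ a; rewrite form_sym.
split=> i j hi hj.
- case: (idx_cases _ hi) => [->|->|->|pi]; [rewrite mkf0|rewrite mkf1|rewrite mkfc|rewrite (mkfp _ _ _ _ pi)];
  case: (idx_cases _ hj) => [->|->|->|pj]; [rewrite mkf0|rewrite mkf1|rewrite mkfc|rewrite (mkfp _ _ _ _ pj)|
    rewrite mkf0|rewrite mkf1|rewrite mkfc|rewrite (mkfp _ _ _ _ pj)|rewrite mkf0|rewrite mkf1|rewrite mkfc|rewrite (mkfp _ _ _ _ pj)|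
    rewrite mkf0|rewrite mkf1|rewrite mkfc|rewrite (mkfp _ _ _ _ pj)];
  try done;
  try (by case: (corep _ _ c0 pj)); try (by case: (corep _ _ c1 pj)); try (by case: (corep _ _ c2 pj));
  try (by case: (corep _ _ c0 pi)); try (by case: (corep _ _ c1 pi)); try (by case: (corep _ _ c2 pi)).
  exact: pad_pad.
- case: (idx_cases _ hi) => [->|->|->|pi]; [rewrite mkf0|rewrite mkf1|rewrite mkfc|rewrite (mkfp _ _ _ _ pi)];
  case: (idx_cases _ hj) => [->|->|->|pj]; [rewrite mkd0|rewrite mkd1|rewrite mkdc|rewrite (mkdp _ _ _ _ pj)|
    rewrite mkd0|rewrite mkd1|rewrite mkdc|rewrite (mkdp _ _ _ _ pj)|rewrite mkd0|rewrite mkd1|rewrite mkdc|rewrite (mkdp _ _ _ _ pj)|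
    rewrite mkd0|rewrite mkd1|rewrite mkdc|rewrite (mkdp _ _ _ _ pj)];
  rewrite ?eqxx ?n0 ?n1 ?n0' ?n1' //;
  try (by case: (pad_ne _ pi) => -> -> ->); try (by case: (pad_ne _ pj) => -> -> ->);
  try (by rewrite corepd // eq_sym; case: (pad_ne _ pj) => a b c; rewrite ?a ?b ?c ?mulr0n);
  try (by case: (pad_ne _ pi) => a b c; rewrite ?a ?b ?c ?mulr0n; case: (corep _ _ d0 pi));
  try (by case: (pad_ne _ pi) => a b c; rewrite ?a ?b ?c ?mulr0n; case: (corep _ _ d1 pi));
  try (by case: (pad_ne _ pi) => a b c; rewrite ?a ?b ?c ?mulr0n; case: (corep _ _ d2 pi)).
  exact: pad_dual.
Qed.

Lemma mk_is_flag v0 v1 v2 u0 u1 u2 a :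
  core v0 -> core v1 -> core v2 -> core u0 -> core u1 -> core u2 ->
  form v0 v0 = 0 -> form v0 v1 = 0 -> form v0 v2 = 0 ->
  form v1 v1 = 0 -> form v1 v2 = 0 -> form v2 v2 = 0 ->
  form v0 u0 = 1 -> form v0 u1 = 0 -> form v0 u2 = 0 ->
  form v1 u0 = 0 -> form v1 u1 = 1 -> form v1 u2 = 0 ->
  form v2 u0 = 0 -> form v2 u1 = 0 -> form v2 u2 = 1 ->
  (sumn a <= n)%N -> is_flag F n a (flag_of a (mkframe v0 v1 v2)).
Proof.
move=> c0 c1 c2 d0 d1 d2 h00 h01 h02 h11 h12 h22 g00 g01 g02 g10 g11 g12 g20 g21 g22 sa.
have [H1 H2] := @frame_ok v0 v1 v2 u0 u1 u2 c0 c1 c2 d0 d1 d2 h00 h01 h02 h11 h12 h22 g00 g01 g02 g10 g11 g12 g20 g21 g22.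
exact: is_flag_of sa H1 H2.
Qed.

Ltac coret := repeat first [apply: coreD | apply: coreB | apply: coreZ | apply: coreN
  | apply: coreE0 | apply: coreE1 | apply: coreEc | apply: coreFc | apply: coreF1 | apply: coreF0].
Ltac fcomp := rewrite ?(formDl, formDr, formBl, formBr, formZl, formZr, formNl, formNr, form0l, form0r) ?tbl; ring.

Definition Xf := mkframe E0 Ec E1.
Definition Yf := mkframe Fc F0 E1.
Definition zz := E0 + E1 + Fc.
Definition ww (t : F) := Ec - (1 + t) *: F1 + t *: F0.
Definition Zf (t : F) := mkframe zz (E0 - t *: Fc) (ww t).
Definition XAf := mkframe E0 E1 Ec.
Definition YAf := mkframe F0 F1 Ec.
Definition w1 (r : F) := E0 + r *: F1 + Ec.
Definition w2 (r : F) := E1 - F0 + (1 - r) *: Fc.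
Definition ZAf (r : F) := mkframe (w1 r) (w2 r) (E0 + F1).

Lemma X_ok : (forall i j, (i < n)%N -> (j < n)%N -> form (Xf i) (Xf j) = 0) /\
  (forall i j, (i < n)%N -> (j < n)%N -> form (Xf i) (mkdual F0 Fc F1 j) = (i == j)%:R).
Proof. apply: frame_ok; (by coret) || fcomp. Qed.
Lemma flagX a : (sumn a <= n)%N -> is_flag F n a (flag_of a Xf).
Proof. by move=> sa; case: (X_ok ) => H1 H2; apply: is_flag_of sa H1 H2. Qed.
Lemma Y_ok : (forall i j, (i < n)%N -> (j < n)%N -> form (Yf i) (Yf j) = 0) /\
  (forall i j, (i < n)%N -> (j < n)%N -> form (Yf i) (mkdual Ec E0 F1 j) = (i == j)%:R).
Proof. apply: frame_ok; (by coret) || fcomp. Qed.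
Lemma flagY a : (sumn a <= n)%N -> is_flag F n a (flag_of a Yf).
Proof. by move=> sa; case: (Y_ok ) => H1 H2; apply: is_flag_of sa H1 H2. Qed.
Lemma Z_ok t : (forall i j, (i < n)%N -> (j < n)%N -> form ((Zf t) i) ((Zf t) j) = 0) /\
  (forall i j, (i < n)%N -> (j < n)%N -> form ((Zf t) i) (mkdual F1 (F0 - F1) Fc j) = (i == j)%:R).
Proof. apply: frame_ok; rewrite /zz /ww; (by coret) || fcomp. Qed.
Lemma flagZ t a : (sumn a <= n)%N -> is_flag F n a (flag_of a (Zf t)).
Proof. by move=> sa; case: (Z_ok t ) => H1 H2; apply: is_flag_of sa H1 H2. Qed.
Lemma XA_ok : (forall i j, (i < n)%N -> (j < n)%N -> form (XAf i) (XAf j) = 0) /\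
  (forall i j, (i < n)%N -> (j < n)%N -> form (XAf i) (mkdual F0 F1 Fc j) = (i == j)%:R).
Proof. apply: frame_ok; (by coret) || fcomp. Qed.
Lemma flagXA a : (sumn a <= n)%N -> is_flag F n a (flag_of a XAf).
Proof. by move=> sa; case: (XA_ok ) => H1 H2; apply: is_flag_of sa H1 H2. Qed.
Lemma YA_ok : (forall i j, (i < n)%N -> (j < n)%N -> form (YAf i) (YAf j) = 0) /\
  (forall i j, (i < n)%N -> (j < n)%N -> form (YAf i) (mkdual E0 E1 Fc j) = (i == j)%:R).
Proof. apply: frame_ok; (by coret) || fcomp. Qed.
Lemma flagYA a : (sumn a <= n)%N -> is_flag F n a (flag_of a YAf).
Proof. by move=> sa; case: (YA_ok ) => H1 H2; apply: is_flag_of sa H1 H2. Qed.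
Lemma ZA_ok r : (forall i j, (i < n)%N -> (j < n)%N -> form ((ZAf r) i) ((ZAf r) j) = 0) /\
  (forall i j, (i < n)%N -> (j < n)%N -> form ((ZAf r) i) (mkdual Fc F1 (F0 - Fc) j) = (i == j)%:R).
Proof. apply: frame_ok; rewrite /w1 /w2; (by coret) || fcomp. Qed.
Lemma flagZA r a : (sumn a <= n)%N -> is_flag F n a (flag_of a (ZAf r)).
Proof. by move=> sa; case: (ZA_ok r ) => H1 H2; apply: is_flag_of sa H1 H2. Qed.

Lemma frame_sub1 x v : (v <= frame_mx x 1)%MS -> exists c, forall w, form v w = c * form (x 0%N) w.
Proof.
move/frame_sub_form => [r Hr].
have h0 : (0 < 2 * n)%N by lia.
exists (r 0 (Ordinal h0)) => w; rewrite Hr (bigD1 (Ordinal h0)) //= big1 ?addr0 //.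
move=> i ni; case: ifP; last by rewrite mulr0.
move=> i1; suff : i = Ordinal h0 by move=> e; rewrite e eqxx in ni.
by apply: val_inj => /=; move: i1; rewrite ltnS leqn0 => /eqP.
Qed.

Lemma mk_perp v0 v1 v2 d w : core w -> form v0 w = 0 ->
  ((1 < d)%N -> form v1 w = 0) -> ((n.-1 < d)%N -> form v2 w = 0) -> (d <= n)%N ->
  forall v, (v <= frame_mx (mkframe v0 v1 v2) d)%MS -> form v w = 0.
Proof.
move=> cw h0 h1 h2 dn v hv; apply: (@frame_perp F n _ _ _ _ hv) => i hi _.
have hin : (i < n)%N by lia.
move: hi; case: (idx_cases _ hin) => [->|->|->|pi] hi; rewrite ?mkf0 ?mkf1 ?mkfc //.
- by apply: h1.
- by apply: h2.
- by rewrite (mkfp _ _ _ _ pi); case: (cw _ pi).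
Qed.

Lemma mk_mem0 v0 v1 v2 d : (0 < d)%N -> (v0 <= frame_mx (mkframe v0 v1 v2) d)%MS.
Proof. by move=> hd; have := @frame_mem F n (mkframe v0 v1 v2) d 0 hd; rewrite mkf0; apply; lia. Qed.
Lemma mk_mem1 v0 v1 v2 d : (1 < d)%N -> (v1 <= frame_mx (mkframe v0 v1 v2) d)%MS.
Proof. by move=> hd; have := @frame_mem F n (mkframe v0 v1 v2) d 1 hd; rewrite mkf1; apply; lia. Qed.
Lemma mk_memc v0 v1 v2 d : (n.-1 < d)%N -> (v2 <= frame_mx (mkframe v0 v1 v2) d)%MS.
Proof. by move=> hd; have := @frame_mem F n (mkframe v0 v1 v2) d n.-1 hd; rewrite mkfc; apply; lia. Qed.

Lemma mx_img (h A B : 'M[F]_(2 * n)) (y : V) : (A *m h == B)%MS -> (y <= A)%MS -> (y *m h <= B)%MS.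
Proof. by case/andP => AB _ hy; apply: submx_trans AB; apply: submxMr. Qed.

Lemma mx_pre (h A B : 'M[F]_(2 * n)) (y : V) : (A *m h == B)%MS -> (y <= B)%MS ->
  exists2 u, (u <= A)%MS & u *m h = y.
Proof.
case/andP => _ BA hy; have := submx_trans hy BA; case/submxP => D ->.
by exists (D *m A); [apply: submxMl | rewrite mulmxA].
Qed.

Lemma Zf_iso t i j : (i < n)%N -> (j < n)%N -> form (Zf t i) (Zf t j) = 0.
Proof. by case: (Z_ok t) => H1 _; apply: H1. Qed.

Lemma ZA_iso r i j : (i < n)%N -> (j < n)%N -> form (ZAf r i) (ZAf r j) = 0.
Proof. by case: (ZA_ok r) => H1 _; apply: H1. Qed.

Lemma zzEc : form zz Ec = 1. Proof. by rewrite /zz; fcomp. Qed.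
Lemma zzF0 : form zz F0 = 1. Proof. by rewrite /zz; fcomp. Qed.
Lemma zzF1 : form zz F1 = 1. Proof. by rewrite /zz; fcomp. Qed.

Lemma unified (h : 'M[F]_(2 * n)) (t s : F) dSX dTX dSY dTY :
  h *m formJ F n *m h^T = formJ F n -> t != s ->
  (0 < dSX)%N -> (dSX < n)%N -> (1 < dTX)%N -> (dTX <= n)%N ->
  (0 < dSY)%N -> (dSY < n)%N -> (1 < dTY)%N -> (dTY <= n)%N ->
  (frame_mx Xf dSX *m h == frame_mx Xf dSX)%MS ->
  (frame_mx Xf dTX *m h == frame_mx Xf dTX)%MS ->
  (frame_mx Yf dSY *m h == frame_mx Yf dSY)%MS ->
  (frame_mx Yf dTY *m h == frame_mx Yf dTY)%MS ->
  (frame_mx (Zf t) 1 *m h == frame_mx (Zf s) 1)%MS ->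
  (frame_mx (Zf t) n *m h == frame_mx (Zf s) n)%MS -> False.
Proof.
move=> hJ ts hSX1 hSX2 hTX1 hTX2 hSY1 hSY2 hTY1 hTY2 eX1 eX2 eY1 eY2 eZ1 eZn.
have fh u v : form (u *m h) (v *m h) = form u v by apply: form_mulmx.
have [c Hc] : exists c, forall w, form (zz *m h) w = c * form zz w.
  have := mx_img _ _ _ _ eZ1 (@mk_mem0 zz (E0 - t *: Fc) (ww t) 1 isT).
  by case/frame_sub1 => c Hc; exists c.
set x := E0 *m h; set y := Fc *m h.
have xS : (x <= frame_mx Xf dSX)%MS by apply: (mx_img _ _ _ _ eX1); apply: mk_mem0.
have yS : (y <= frame_mx Yf dSY)%MS by apply: (mx_img _ _ _ _ eY1); apply: mk_mem0.
have [u uT uh] := mx_pre _ _ _ _ eX2 (@mk_mem1 E0 Ec E1 _ hTX1).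
have R1 : c - form y Ec = 0.
  have := fh (zz - Fc) u; rewrite uh mulmxBl formBl Hc zzEc mulr1 => ->.
  rewrite form_sym; apply: (@mk_perp E0 Ec E1 dTX (zz - Fc) _ _ _ _ hTX2 u uT); rewrite /zz;
    (by coret) || (move=> *; fcomp) || fcomp.
have [u' uT' uh'] := mx_pre _ _ _ _ eY2 (@mk_mem1 Fc F0 E1 _ hTY1).
have R2 : c - form x F0 = 0.
  have := fh (zz - E0) u'; rewrite uh' mulmxBl formBl Hc zzF0 mulr1 => ->.
  rewrite form_sym; apply: (@mk_perp Fc F0 E1 dTY (zz - E0) _ _ _ _ hTY2 u' uT'); rewrite /zz;
    (by coret) || (move=> *; fcomp) || fcomp.
have wsL : (ww s <= frame_mx (Zf s) n)%MS.
  by rewrite /Zf; apply: mk_memc; clear -hn; lia.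
have [u'' uT'' uh''] := mx_pre _ _ _ _ eZn wsL.
have R3 : form x (ww s) - t * form y (ww s) = 0.
  have := fh (E0 - t *: Fc) u''; rewrite uh'' mulmxBl -scalemxAl formBl formZl => ->.
  rewrite form_sym; apply: (@frame_perp F n _ _ _ _ uT'') => i hi _.
  have h1n : (1 < n)%N by clear -hn; lia.
  by have := @Zf_iso t i 1 hi h1n; rewrite /Zf mkf1.
have P1 : form x (ww s) - s * form x F0 = 0.
  rewrite -formZr -formBr; apply: (@mk_perp E0 Ec E1 dSX _ _ _ _ _ (ltnW hSX2) x xS); rewrite /ww;
    (by coret) || (move=> *; fcomp) || fcomp || (move=> H; exfalso; clear -H hSX2 hSY2; lia).
have P2 : form y (ww s) - form y Ec = 0.
  rewrite -formBr; apply: (@mk_perp Fc F0 E1 dSY _ _ _ _ _ (ltnW hSY2) y yS); rewrite /ww;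
    (by coret) || (move=> *; fcomp) || fcomp || (move=> H; exfalso; clear -H hSX2 hSY2; lia).
have c0 : c = 0.
  have eP1 : form x (ww s) = s * form x F0 by apply/eqP; rewrite -subr_eq0 P1.
  have eP2 : form y (ww s) = form y Ec by apply/eqP; rewrite -subr_eq0 P2.
  have eR1 : c = form y Ec by apply/eqP; rewrite -subr_eq0 R1.
  have eR2 : c = form x F0 by apply/eqP; rewrite -subr_eq0 R2.
  have : (s - t) * c = 0 by rewrite -R3 eP1 eP2 -eR1 -eR2; ring.
  move/eqP; rewrite mulf_eq0 subr_eq0 eq_sym (negbTE ts) /= => /eqP //.
have := fh zz F1; rewrite Hc c0 mul0r zzF1 => /eqP; by rewrite eq_sym oner_eq0.
Qed.

Lemma mk_perp' v0 v1 v2 d w : (forall k, pad k -> form (ev k) w = 0) -> form v0 w = 0 ->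
  ((1 < d)%N -> form v1 w = 0) -> ((n.-1 < d)%N -> form v2 w = 0) -> (d <= n)%N ->
  forall v, (v <= frame_mx (mkframe v0 v1 v2) d)%MS -> form v w = 0.
Proof.
move=> cw h0 h1 h2 dn v hv; apply: (@frame_perp F n _ _ _ _ hv) => i hi _.
have hin : (i < n)%N by clear -hi dn; lia.
move: hi; case: (idx_cases _ hin) => [->|->|->|pi] hi; rewrite ?mkf0 ?mkf1 ?mkfc //.
- by apply: h1.
- by apply: h2.
- by rewrite (mkfp _ _ _ _ pi); apply: cw.
Qed.

Lemma frame_sub2 v0 v1 v2 d v : (2 <= d)%N -> (d <= n.-1)%N ->
  (v <= frame_mx (mkframe v0 v1 v2) d)%MS ->
  exists a b, forall w, (forall k, pad k -> form (ev k) w = 0) ->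
    form v w = a * form v0 w + b * form v1 w.
Proof.
move=> d2 dn /frame_sub_form [r Hr].
have h0 : (0 < 2 * n)%N by clear -hn; lia.
have h1 : (1 < 2 * n)%N by clear -hn; lia.
exists (r 0 (Ordinal h0)), (r 0 (Ordinal h1)) => w pw.
rewrite Hr (bigD1 (Ordinal h0)) //= (bigD1 (Ordinal h1)) //= big1 ?addr0.
  rewrite (_ : (0 < d)%N = true); last by clear -d2; lia.
  by rewrite (_ : (1 < d)%N = true) //; clear -d2; lia.
move=> i /andP [ni0 ni1]; case: ifP; last by rewrite mulr0.
move=> id.
have pi : pad i.
  rewrite /pad; apply/andP; split; last by clear -id dn; lia.
  move: ni0 ni1; rewrite -!val_eqE /=; clear; case: (nat_of_ord i) => [|[|k]] //.
by rewrite (mkfp _ _ _ _ pi) pw ?mulr0.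
Qed.

Lemma gamma (h : 'M[F]_(2 * n)) s p q r (wp piw : V) g d :
  h *m formJ F n *m h^T = formJ F n ->
  (2 <= p)%N -> (p <= n.-1)%N -> (2 <= q)%N -> (q <= n.-1)%N -> (r <= n.-1)%N ->
  (frame_mx XAf p *m h == frame_mx XAf p)%MS -> (frame_mx YAf q *m h == frame_mx YAf q)%MS ->
  (piw <= frame_mx XAf p)%MS ->
  (forall u, (u <= frame_mx YAf q)%MS -> form (wp - piw) u = 0) ->
  (forall w, (forall k, pad k -> form (ev k) w = 0) ->
      form (wp *m h) w = g * form (w1 s) w + d * form (w2 s) w) ->
  forall y, (y <= frame_mx (ZAf s) r)%MS -> form y (g *: E0 + d *: E1) = form y (piw *m h).
Proof.
move=> hJ p2 pn q2 qn rn eX eY piU wpV dec y yW.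
have fh u v : form (u *m h) (v *m h) = form u v by apply: form_mulmx.
have cpad : forall v, core v -> forall k, pad k -> form (ev k) v = 0.
  by move=> v cv k pk; case: (cv k pk).
set dd := g *: E0 + d *: E1 - piw *m h.
have dU : (dd <= frame_mx XAf p)%MS.
  apply: addmx_sub; last first.
    by rewrite -scaleN1r; apply: scalemx_sub; apply: (mx_img _ _ _ _ eX).
  apply: addmx_sub; apply: scalemx_sub.
    by apply: mk_mem0; clear -p2; lia.
  by apply: mk_mem1.
have F0V : (F0 <= frame_mx YAf q)%MS by apply: mk_mem0; clear -q2; lia.
have F1V : (F1 <= frame_mx YAf q)%MS by apply: mk_mem1.
have [u0 u0V u0h] := mx_pre _ _ _ _ eY F0V.
have [u1 u1V u1h] := mx_pre _ _ _ _ eY F1V.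
have w1F0 : form (w1 s) F0 = 1 by rewrite /w1; fcomp.
have w2F0 : form (w2 s) F0 = 0 by rewrite /w2; fcomp.
have w1F1 : form (w1 s) F1 = 0 by rewrite /w1; fcomp.
have w2F1 : form (w2 s) F1 = 1 by rewrite /w2; fcomp.
have dF0 : form dd F0 = 0.
  rewrite /dd formBl formDl !formZl t_E0_F0 t_E1_F0 mulr1 mulr0 addr0.
  have := dec F0 (cpad _ coreF0); rewrite w1F0 w2F0 mulr1 mulr0 addr0 => eg.
  rewrite -u0h fh -eg -u0h fh; apply/eqP; rewrite subr_eq0; apply/eqP.
  by have := wpV _ u0V; rewrite formBl => /eqP; rewrite subr_eq0 => /eqP.
have dF1 : form dd F1 = 0.
  rewrite /dd formBl formDl !formZl t_E0_F1 t_E1_F1 mulr1 mulr0 add0r.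
  have := dec F1 (cpad _ coreF1); rewrite w1F1 w2F1 mulr1 mulr0 add0r => eg.
  rewrite -u1h fh -eg -u1h fh; apply/eqP; rewrite subr_eq0; apply/eqP.
  by have := wpV _ u1V; rewrite formBl => /eqP; rewrite subr_eq0 => /eqP.
have [a [b Hab]] := @frame_sub2 E0 E1 Ec p dd p2 pn dU.
have a0 : a = 0.
  by have := Hab F0 (cpad _ coreF0); rewrite dF0 t_E0_F0 t_E1_F0 mulr1 mulr0 addr0.
have b0 : b = 0.
  by have := Hab F1 (cpad _ coreF1); rewrite dF1 t_E0_F1 t_E1_F1 mulr1 mulr0 add0r.
have ypad : forall k, pad k -> form (ev k) y = 0.
  move=> k pk; rewrite form_sym.
  apply: (@mk_perp' (w1 s) (w2 s) (E0 + F1) r (ev k) _ _ _ _ _ y yW).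
  - by move=> i pi; apply: pad_pad.
  - by rewrite form_sym; apply: cpad => //; rewrite /w1; coret.
  - by move=> _; rewrite form_sym; apply: cpad => //; rewrite /w2; coret.
  - by move=> H; exfalso; clear -H rn; lia.
  - by clear -rn; lia.
have := Hab y ypad; rewrite a0 b0 !mul0r addr0 /dd form_sym formBr => /eqP.
by rewrite subr_eq0 => /eqP.
Qed.

Lemma aaa (h : 'M[F]_(2 * n)) (t s : F) p q r :
  h *m formJ F n *m h^T = formJ F n -> t != s -> t * s != 1 -> s != 1 ->
  (2 <= p)%N -> (p <= n.-1)%N -> (2 <= q)%N -> (q <= n.-1)%N -> (2 <= r)%N -> (r <= n.-1)%N ->
  (frame_mx XAf p *m h == frame_mx XAf p)%MS -> (frame_mx YAf q *m h == frame_mx YAf q)%MS ->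
  (frame_mx (ZAf t) r *m h == frame_mx (ZAf s) r)%MS -> False.
Proof.
move=> hJ ts tsn s1 p2 pn q2 qn r2 rn eX eY eZ.
have fh u v : form (u *m h) (v *m h) = form u v by apply: form_mulmx.
have cpad : forall v, core v -> forall k, pad k -> form (ev k) v = 0.
  by move=> v cv k pk; case: (cv k pk).
have aW : (w1 t *m h <= frame_mx (ZAf s) r)%MS.
  by apply: (mx_img _ _ _ _ eZ); rewrite /ZAf; apply: mk_mem0; clear -r2; lia.
have bW : (w2 t *m h <= frame_mx (ZAf s) r)%MS.
  by apply: (mx_img _ _ _ _ eZ); rewrite /ZAf; apply: mk_mem1.
have [a0 [a1 Ha]] := @frame_sub2 (w1 s) (w2 s) (E0 + F1) r _ r2 rn aW.
have [b0 [b1 Hb]] := @frame_sub2 (w1 s) (w2 s) (E0 + F1) r _ r2 rn bW.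
have E0U : (E0 <= frame_mx XAf p)%MS by apply: mk_mem0; clear -p2; lia.
have E1U : (E1 <= frame_mx XAf p)%MS by apply: mk_mem1.
have V1 : forall u, (u <= frame_mx YAf q)%MS -> form (w1 t - E0) u = 0.
  move=> u uV; rewrite form_sym.
  apply: (@mk_perp F0 F1 Ec q _ _ _ _ _ (leq_trans qn (leq_pred n)) u uV); rewrite /w1;
    (by coret) || (move=> *; fcomp) || fcomp || (move=> H; exfalso; clear -H qn; lia).
have V2 : forall u, (u <= frame_mx YAf q)%MS -> form (w2 t - E1) u = 0.
  move=> u uV; rewrite form_sym.
  apply: (@mk_perp F0 F1 Ec q _ _ _ _ _ (leq_trans qn (leq_pred n)) u uV); rewrite /w2;
    (by coret) || (move=> *; fcomp) || fcomp || (move=> H; exfalso; clear -H qn; lia).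
have Ga := @gamma h s p q r (w1 t) E0 a0 a1 hJ p2 pn q2 qn rn eX eY E0U V1 Ha.
have Gb := @gamma h s p q r (w2 t) E1 b0 b1 hJ p2 pn q2 qn rn eX eY E1U V2 Hb.
have w1E0 : form (w1 s) E0 = 0 by rewrite /w1; fcomp.
have w2E0 : form (w2 s) E0 = -1 by rewrite /w2; fcomp.
have w1E1 : form (w1 s) E1 = s by rewrite /w1; fcomp.
have w2E1 : form (w2 s) E1 = 0 by rewrite /w2; fcomp.
have v1E0 : form (w1 t) E0 = 0 by rewrite /w1; fcomp.
have v2E0 : form (w2 t) E0 = -1 by rewrite /w2; fcomp.
have v1E1 : form (w1 t) E1 = t by rewrite /w1; fcomp.
have fa0 : form (w1 t *m h) E0 = - a1 by rewrite Ha; [rewrite w1E0 w2E0; ring | exact: cpad _ coreE0].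
have fa1 : form (w1 t *m h) E1 = a0 * s by rewrite Ha; [rewrite w1E1 w2E1; ring | exact: cpad _ coreE1].
have fb0 : form (w2 t *m h) E0 = - b1 by rewrite Hb; [rewrite w1E0 w2E0; ring | exact: cpad _ coreE0].
have fb1 : form (w2 t *m h) E1 = b0 * s by rewrite Hb; [rewrite w1E1 w2E1; ring | exact: cpad _ coreE1].
have E11 := Ga _ aW; rewrite fh v1E0 formDr !formZr fa0 fa1 in E11.
have E21 := Ga _ bW; rewrite fh v2E0 formDr !formZr fb0 fb1 in E21.
have E12 := Gb _ aW; rewrite fh v1E1 formDr !formZr fa0 fa1 in E12.
have s1' : s - 1 != 0 by rewrite subr_eq0.
have : a0 * a1 * (s - 1) = 0 by rewrite -E11; ring.
move/eqP; rewrite !mulf_eq0 (negbTE s1') orbF => /orP [/eqP z0 | /eqP z1].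
- have e : t * s = - (a0 * - b1 + a1 * (b0 * s)) by rewrite -E12 z0; ring.
  by move: tsn; rewrite e E21 opprK eqxx.
- have e : t = s * - (a0 * - b1 + a1 * (b0 * s)) by rewrite -E12 z1; ring.
  by move: ts; rewrite e E21 opprK mulr1 eqxx.
Qed.
End Core.

Set Implicit Arguments.
Unset Strict Implicit.

Lemma pigeon (T U : eqType) (P : U -> T -> Prop) (R : seq T) (L : seq U) :
  uniq L -> (size R < size L)%N -> (forall t, t \in L -> exists2 r, r \in R & P t r) ->
  exists t s r, [/\ t \in L, s \in L, t != s, P t r & P s r].
Proof.
elim: R L => [|r0 R IH] L uL sRL H.
  by case: L uL sRL H => // t L' _ _ /(_ t (mem_head _ _)) [r].
case: (Classical_Prop.classic (exists t s, [/\ t \in L, s \in L, t != s, P t r0 & P s r0])).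
  by case=> t [s [tL sL ts Pt Ps]]; exists t, s, r0.
move=> Hno.
case: (Classical_Prop.classic (exists2 t0, t0 \in L & P t0 r0)) => [[t0 t0L Pt0]|Hno0].
- have [t [s [r [tL sL ts Pt Ps]]]] : exists t s r, [/\ t \in rem t0 L, s \in rem t0 L, t != s, P t r & P s r].
    apply: (IH (rem t0 L)).
    + exact: rem_uniq.
    + by rewrite size_rem //; move: sRL => /=; case: (size L) => //.
    + move=> t tL'; have tL : t \in L by apply: (mem_rem tL').
      have tt0 : t != t0.
        by apply/eqP => e; move: tL'; rewrite e mem_rem_uniqF.
      case: (H t tL) => r; rewrite inE => /orP [/eqP -> Pt|rR Pt]; last by exists r.
      by exfalso; apply: Hno; exists t, t0.
  by exists t, s, r; split => //; apply: mem_rem; eassumption.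
- apply: (IH L) => //; first by move: sRL => /=; lia.
  move=> t tL; case: (H t tL) => r; rewrite inE => /orP [/eqP -> Pt|rR Pt]; last by exists r.
  by exfalso; apply: Hno0; exists t.
Qed.

Lemma good_list (F : fieldType) (F_infinite : forall s : seq F, exists x : F, x \notin s) k :
  exists L : seq F, [/\ uniq L, size L = k,
    (forall t, t \in L -> t != 0 /\ t != 1) &
    (forall t s, t \in L -> s \in L -> t != s -> t * s != 1)].
Proof.
elim: k => [|k [L [uL sL H01 Hm]]]; first by exists [::].
have [x hx] := F_infinite [:: 0, 1 & L ++ map (fun y => y^-1) L].
move: hx; rewrite !inE mem_cat negb_or => /andP [x0]; rewrite negb_or => /andP [x1].
rewrite negb_or => /andP [xL xi].
have key : forall y, y \in L -> x * y != 1.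
  move=> y yL; apply/eqP => e; move: xi => /negP; apply.
  have y0 : y != 0 by case: (H01 y yL).
  apply/mapP; exists y => //; by rewrite -[x]mulr1 -(mulfV y0) mulrA e mul1r.
exists (x :: L); split => //=.
- by rewrite xL.
- by rewrite sL.
- by move=> t; rewrite inE => /orP [/eqP ->|/H01].
- move=> t s; rewrite !inE => /orP [/eqP ->|tL] /orP [/eqP ->|sL'] //; first by rewrite eqxx.
  + by move=> _; apply: key.
  + by move=> _; rewrite mulrC; apply: key.
  + by apply: Hm.
Qed.

Lemma fmo_swap13 (F : fieldType) n a b c :
  finitely_many_orbits F n a b c -> finitely_many_orbits F n c b a.
Proof.
case=> reps H; exists [seq (r.2, r.1.2, r.1.1) | r <- reps] => X Y Z fX fY fZ.
have [r rR [g gO [h1 h2 h3]]] := H Z Y X fZ fY fX.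
by exists (r.2, r.1.2, r.1.1); [apply: map_f | exists g].
Qed.

Lemma fmo_swap23 (F : fieldType) n a b c :
  finitely_many_orbits F n a b c -> finitely_many_orbits F n a c b.
Proof.
case=> reps H; exists [seq (r.1.1, r.2, r.1.2) | r <- reps] => X Y Z fX fY fZ.
have [r rR [g gO [h1 h2 h3]]] := H X Z Y fX fZ fY.
by exists (r.1.1, r.2, r.1.2); [apply: map_f | exists g].
Qed.

Definition Sa (a : seq nat) j := sumn (take j.+1 a).

Lemma all_pos_sum0 (s : seq nat) : all (fun x => (0 < x)%N) s -> sumn s = 0%N -> s = [::].
Proof. by case: s => //= x s /andP [x0 _]; lia. Qed.

Lemma classify n a : admissible_seq n a -> a != [:: 1%N] -> a != [:: n] ->
  [/\ exists2 j, (j < size a)%N & (1 <= Sa a j <= n.-1)%N,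
      exists2 j, (j < size a)%N & (2 <= Sa a j <= n)%N &
      (exists2 j, (j < size a)%N & (2 <= Sa a j <= n.-1)%N) \/
      ((exists2 j, (j < size a)%N & Sa a j = 1%N) /\ (exists2 j, (j < size a)%N & Sa a j = n))].
Proof.
case/and3P; case: a => // x rest _ /= /andP [x0 pr] sa n1 nn.
have S0 : Sa (x :: rest) 0 = x by rewrite /Sa /= take0 /= addn0.
have SL : Sa (x :: rest) (size rest) = (x + sumn rest)%N by rewrite /Sa /= take_size.
have r0 : sumn rest = 0%N -> rest = [::] by apply: all_pos_sum0.
have xn : x != n.
  apply/eqP => e; have rs : sumn rest = 0%N by clear -sa e; lia.
  by move: nn; rewrite e (r0 rs) eqxx.
have x1 : (x + sumn rest != 1)%N.
  apply/eqP => e; have rs : sumn rest = 0%N by clear -e x0; lia.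
  have ex : x = 1%N by clear -e x0; lia.
  by move: n1; rewrite ex (r0 rs) eqxx.
split.
- by exists 0%N => //; rewrite S0; apply/andP; split; lia.
- by exists (size rest) => //; rewrite SL; apply/andP; split; lia.
case: (boolP (has (fun j => (2 <= Sa (x :: rest) j <= n.-1)%N) (iota 0 (size rest).+1))).
  by case/hasP => j; rewrite mem_iota add0n => /andP [_ js] hj; left; exists j.
move/hasPn => H; right; split.
- exists 0%N => //; rewrite S0.
  have := H 0%N; rewrite mem_iota /= S0 => /(_ isT); lia.
- exists (size rest) => //; rewrite SL.
  have := H (size rest); rewrite mem_iota /= SL => /(_ (ltnSn _)); lia.
Qed.

Lemma formJ_sq (F : fieldType) n : formJ F n *m formJ F n = 1%:M.
Proof.
apply/matrixP => i j; rewrite !mxE (bigD1 (rev_ord i)) //= big1 => [|k nk].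
  have hi := ltn_ord i; have hj := ltn_ord j.
  rewrite !mxE /= addr0.
  have E1 : (i + (2 * n - i.+1) == (2 * n).-1)%N by apply/eqP; clear -hi; lia.
  have E2 : ((2 * n - i.+1 + j == (2 * n).-1)%N) = (nat_of_ord i == nat_of_ord j).
    by apply/eqP/eqP; clear -hi hj; lia.
  by rewrite E1 E2 mul1r.
have hi := ltn_ord i; have hk := ltn_ord k.
rewrite !mxE (_ : (i + k == (2 * n).-1)%N = false) ?mul0r //.
apply/negbTE/eqP => e; move: nk => /eqP; apply; apply: val_inj => /=.
by clear -e hi hk; lia.
Qed.

Lemma orth_unit (F : fieldType) n (g : 'M[F]_(2 * n)) :
  g *m formJ F n *m g^T = formJ F n -> g \in unitmx.
Proof.
move=> hg; have := @mulmx1_unit _ _ g (formJ F n *m g^T *m formJ F n).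
by rewrite !mulmxA hg formJ_sq => /(_ erefl) [].
Qed.

Lemma orth_conj (F : fieldType) n (g g' : 'M[F]_(2 * n)) :
  g *m formJ F n *m g^T = formJ F n -> g' *m formJ F n *m g'^T = formJ F n ->
  (invmx g *m g') *m formJ F n *m (invmx g *m g')^T = formJ F n.
Proof.
move=> hg hg'; have gu := orth_unit hg.
have e1 : invmx g *m g' *m formJ F n *m (g'^T *m (invmx g)^T) =
          invmx g *m (g' *m formJ F n *m g'^T) *m (invmx g)^T by rewrite !mulmxA.
rewrite trmx_mul e1 hg' -{1}hg !mulmxA (mulVmx gu) mul1mx -mulmxA -trmx_mul (mulVmx gu) trmx1 mulmx1 //.
Qed.

Lemma comp_conj (F : fieldType) n (R A B g g' : 'M[F]_(2 * n)) :
  g \in unitmx -> (R *m g == A)%MS -> (R *m g' == B)%MS -> (A *m (invmx g *m g') == B)%MS.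
Proof.
move=> gu /eqmxP hA /eqmxP hB; apply/eqmxP.
have h1 : (A *m invmx g :=: R)%MS.
  apply: eqmx_trans (eqmx_sym (eqmxMr (invmx g) hA)) _.
  by rewrite mulmxK //.
by rewrite mulmxA; apply: eqmx_trans (eqmxMr g' h1) hB.
Qed.

Lemma adm_sum n a : admissible_seq n a -> (sumn a <= n)%N.
Proof. by case/and3P. Qed.

Lemma comp_of (F : fieldType) n (R A B : seq 'M[F]_(2 * n)) g g' j :
  g \in unitmx -> flag_act_eq F n R A g -> flag_act_eq F n R B g' -> (j < size A)%N ->
  (nth 0 A j *m (invmx g *m g') == nth 0 B j)%MS.
Proof.
move=> gu [sRA HA] [sRB HB] hj.
by apply: (comp_conj gu (HA j _) (HB j _)); rewrite sRA.
Qed.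

Lemma orth_of (F : fieldType) n g : g \in orthogonal_group F n ->
  g *m formJ F n *m g^T = formJ F n.
Proof. by rewrite inE => /eqP. Qed.

Lemma main_B (F : fieldType) (F_infinite : forall s : seq F, exists x : F, x \notin s)
  n (hn : (3 <= n)%N) a b c :
  admissible_seq n a -> admissible_seq n b -> admissible_seq n c ->
  finitely_many_orbits F n a b c ->
  (exists2 j, (j < size a)%N & (1 <= Sa a j <= n.-1)%N) ->
  (exists2 j, (j < size a)%N & (2 <= Sa a j <= n)%N) ->
  (exists2 j, (j < size b)%N & (1 <= Sa b j <= n.-1)%N) ->
  (exists2 j, (j < size b)%N & (2 <= Sa b j <= n)%N) ->
  (exists2 j, (j < size c)%N & Sa c j = 1%N) ->
  (exists2 j, (j < size c)%N & Sa c j = n) -> False.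
Proof.
move=> ha hb hc [reps Hreps] [jSX hjSX SXr] [jTX hjTX TXr] [jSY hjSY SYr] [jTY hjTY TYr]
  [jZ1 hjZ1 Z1] [jZn hjZn Zn].
set X := flag_of F n a (Xf F n); set Y := flag_of F n b (Yf F n).
have fX : is_flag F n a X by apply: flagX => //; apply: adm_sum.
have fY : is_flag F n b Y by apply: flagY => //; apply: adm_sum.
have fZ t : is_flag F n c (flag_of F n c (Zf F n t)) by apply: flagZ => //; apply: adm_sum.
have [L [uL sL H01 Hm]] := good_list F_infinite (size reps).+1.
have := @pigeon _ _ (fun t r => exists2 g, g \in orthogonal_group F n &
   [/\ flag_act_eq F n r.1.1 X g, flag_act_eq F n r.1.2 Y g &
       flag_act_eq F n r.2 (flag_of F n c (Zf F n t)) g]) reps L uL.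
rewrite sL ltnSn => /(_ isT) [].
  by move=> t _; apply: Hreps.
move=> t [s [r [tL sL' ts [g gO [ax ay az]] [g' gO' [ax' ay' az']]]]].
have hg := orth_of gO; have hg' := orth_of gO'.
have gu := orth_unit hg; have hJ := orth_conj hg hg'.
have cX j : (j < size a)%N -> (frame_mx F n (Xf F n) (Sa a j) *m (invmx g *m g') ==
                               frame_mx F n (Xf F n) (Sa a j))%MS.
  by move=> hj; have := comp_of gu ax ax' (_ : j < size X)%N; rewrite !nth_flag_of // size_flag_of; apply.
have cY j : (j < size b)%N -> (frame_mx F n (Yf F n) (Sa b j) *m (invmx g *m g') ==
                               frame_mx F n (Yf F n) (Sa b j))%MS.
  by move=> hj; have := comp_of gu ay ay' (_ : j < size Y)%N; rewrite !nth_flag_of // size_flag_of; apply.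
have cZ j : (j < size c)%N -> (frame_mx F n (Zf F n t) (Sa c j) *m (invmx g *m g') ==
                               frame_mx F n (Zf F n s) (Sa c j))%MS.
  by move=> hj; have := comp_of gu az az' (_ : j < size (flag_of F n c (Zf F n t)))%N;
    rewrite !nth_flag_of // size_flag_of; apply.
move: SXr TXr SYr TYr => /andP [SX1 SX2] /andP [TX1 TX2] /andP [SY1 SY2] /andP [TY1 TY2].
apply: (@unified F n hn (invmx g *m g') t s (Sa a jSX) (Sa a jTX) (Sa b jSY) (Sa b jTY) hJ ts).
all: try (by clear -hn SX1 SX2 TX1 TX2 SY1 SY2 TY1 TY2; lia).
- exact: cX.
- exact: cX.
- exact: cY.
- exact: cY.
- by have := cZ _ hjZ1; rewrite Z1.
- by have := cZ _ hjZn; rewrite Zn.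
Qed.

Lemma main_A (F : fieldType) (F_infinite : forall s : seq F, exists x : F, x \notin s)
  n (hn : (3 <= n)%N) a b c :
  admissible_seq n a -> admissible_seq n b -> admissible_seq n c ->
  finitely_many_orbits F n a b c ->
  (exists2 j, (j < size a)%N & (2 <= Sa a j <= n.-1)%N) ->
  (exists2 j, (j < size b)%N & (2 <= Sa b j <= n.-1)%N) ->
  (exists2 j, (j < size c)%N & (2 <= Sa c j <= n.-1)%N) -> False.
Proof.
move=> ha hb hc [reps Hreps] [jX hjX Xr] [jY hjY Yr] [jZ hjZ Zr].
set X := flag_of F n a (XAf F n); set Y := flag_of F n b (YAf F n).
have fX : is_flag F n a X by apply: flagXA => //; apply: adm_sum.
have fY : is_flag F n b Y by apply: flagYA => //; apply: adm_sum.
have fZ t : is_flag F n c (flag_of F n c (ZAf F n t)) by apply: flagZA => //; apply: adm_sum.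
have [L [uL sL H01 Hm]] := good_list F_infinite (size reps).+1.
have := @pigeon _ _ (fun t r => exists2 g, g \in orthogonal_group F n &
   [/\ flag_act_eq F n r.1.1 X g, flag_act_eq F n r.1.2 Y g &
       flag_act_eq F n r.2 (flag_of F n c (ZAf F n t)) g]) reps L uL.
rewrite sL ltnSn => /(_ isT) [].
  by move=> t _; apply: Hreps.
move=> t [s [r [tL sL' ts [g gO [ax ay az]] [g' gO' [ax' ay' az']]]]].
have hg := orth_of gO; have hg' := orth_of gO'.
have gu := orth_unit hg; have hJ := orth_conj hg hg'.
have cX : (frame_mx F n (XAf F n) (Sa a jX) *m (invmx g *m g') ==
           frame_mx F n (XAf F n) (Sa a jX))%MS.
  by have := comp_of gu ax ax' (_ : jX < size X)%N; rewrite !nth_flag_of // size_flag_of; apply.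
have cY : (frame_mx F n (YAf F n) (Sa b jY) *m (invmx g *m g') ==
           frame_mx F n (YAf F n) (Sa b jY))%MS.
  by have := comp_of gu ay ay' (_ : jY < size Y)%N; rewrite !nth_flag_of // size_flag_of; apply.
have cZ : (frame_mx F n (ZAf F n t) (Sa c jZ) *m (invmx g *m g') ==
           frame_mx F n (ZAf F n s) (Sa c jZ))%MS.
  by have := comp_of gu az az' (_ : jZ < size (flag_of F n c (ZAf F n t)))%N;
    rewrite !nth_flag_of // size_flag_of; apply.
move: Xr Yr Zr => /andP [X1 X2] /andP [Y1 Y2] /andP [Z1 Z2].
have s1 : s != 1 by case: (H01 s sL').
exact: (@aaa F n hn (invmx g *m g') t s _ _ _ hJ ts (Hm t s tL sL' ts) s1 X1 X2 Y1 Y2 Z1 Z2 cX cY cZ).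
Qed.

Unset Implicit Arguments.
Unset Strict Implicit.
Theorem proposition1p3 (F : fieldType)
  (F_infinite : forall s : seq F, exists x : F, x \notin s)
  (F_char : (2%:R : F) != 0)
  (n : nat) (hn : (3 <= n)%N) (a b c : seq nat)
  (ha : admissible_seq n a) (hb : admissible_seq n b) (hc : admissible_seq n c) :
  finitely_many_orbits F n a b c ->
  [\/ a = [:: 1%N] \/ a = [:: n], b = [:: 1%N] \/ b = [:: n]
    | c = [:: 1%N] \/ c = [:: n]].
Proof.
move=> fmo.
case: (boolP (a == [:: 1%N])) => [/eqP ->|a1]; first by constructor 1; left.
case: (boolP (a == [:: n])) => [/eqP ->|an]; first by constructor 1; right.
case: (boolP (b == [:: 1%N])) => [/eqP ->|b1]; first by constructor 2; left.
case: (boolP (b == [:: n])) => [/eqP ->|bn]; first by constructor 2; right.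
case: (boolP (c == [:: 1%N])) => [/eqP ->|c1]; first by constructor 3; left.
case: (boolP (c == [:: n])) => [/eqP ->|cn]; first by constructor 3; right.
exfalso.
have [SXa TXa Ra] := classify ha a1 an.
have [SXb TXb Rb] := classify hb b1 bn.
have [SXc TXc Rc] := classify hc c1 cn.
case: Rc => [Ac|[Zc1 Zcn]]; last first.
  exact: (main_B F_infinite hn ha hb hc fmo SXa TXa SXb TXb Zc1 Zcn).
case: Ra => [Aa|[Za1 Zan]]; last first.
  exact: (main_B F_infinite hn hc hb ha (fmo_swap13 fmo) SXc TXc SXb TXb Za1 Zan).
case: Rb => [Ab|[Zb1 Zbn]]; last first.
  exact: (main_B F_infinite hn ha hc hb (fmo_swap23 fmo) SXa TXa SXc TXc Zb1 Zbn).
exact: (main_A F_infinite hn ha hb hc fmo Aa Ab Ac).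
Qed.
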